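(* Let $G$ be a pronilpotent group generated (topologically) by closed subgroups $G_1,\dots,G_t$ such that for every $i\geq1$ the closed subgroup $\gamma_i(G)$ is generated by the subgroups $\gamma_i(G)\cap G_j$, $1\leq j\leq t$. Then $G=G_1G_2\cdots G_t$.
   Context: In a profinite group, $\gamma_1(G)=G$ and $\gamma_i(G)$ is the closed subgroup generated by all commutators $[x,g]$ with $x\in\gamma_{i-1}(G)$, $g\in G$. A pronilpotent group is an inverse limit of finite nilpotent groups. *)

(* Defs.v *)
From HB Require Import structures.
From mathcomp Require Import all_boot monoid.
From mathcomp Require Import boolp classical_sets topology.

Set Implicit Arguments.
Unset Strict Implicit.
Unset Printing Implicit Defensive.

Local Open Scope classical_set_scope.

#[short(type="groupTopType")]
HB.structure Definition GroupTop :=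
  {G of monoid.Group G & Topological G}.

Section ProfiniteDefs.
Variable G : groupTopType.

Local Notation mulg := (@monoid.mul G).
Local Notation invg := (@monoid.inv G).
Local Notation oneg := (@monoid.one G).
Local Notation commg := (@monoid.commg G).

Definition is_topological_group : Prop :=
  continuous (fun p : G * G => mulg p.1 p.2) /\ continuous invg.

Definition is_profinite : Prop :=
  [/\ is_topological_group, compact [set: G], hausdorff_space G
    & totally_disconnected [set: G]].

Definition is_subgroup (H : set G) : Prop :=
  [/\ H oneg, (forall x y, H x -> H y -> H (mulg x y))
    & (forall x, H x -> H (invg x))].

Definition is_closed_subgroup (H : set G) : Prop :=
  is_subgroup H /\ closed H.

Definition is_normal_subgroup (N : set G) : Prop :=
  is_subgroup N /\ (forall x g, N x -> N (mulg (invg g) (mulg x g))).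

Definition gen (S : set G) : set G :=
  \bigcap_(H in [set H | is_subgroup H /\ S `<=` H]) H.

Definition cl_gen (S : set G) : set G :=
  \bigcap_(H in [set H | is_closed_subgroup H /\ S `<=` H]) H.

Definition comms (A : set G) : set G :=
  [set commg x g | x in A & g in [set: G]].

(* closed lower central series: gamma (n.+1) = gamma_{n+1}(G);
   gamma 0 = gamma 1 = G *)
Fixpoint gamma (n : nat) : set G :=
  match n with
  | 0 => [set: G]
  | 1 => [set: G]
  | m.+1 => cl_gen (comms (gamma m))
  end.

Fixpoint agamma (n : nat) : set G :=
  match n with
  | 0 => [set: G]
  | 1 => [set: G]
  | m.+1 => gen (comms (agamma m))
  end.

(* pronilpotent: profinite and every (finite, continuous) quotient G/N by an
   open normal subgroup N is nilpotent, i.e. gamma_n(G/N) = 1 for some n,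
   i.e. gamma_n(G) <= N (abstract lower central series). *)
Definition is_pronilpotent : Prop :=
  is_profinite /\
  forall N : set G, is_normal_subgroup N -> open N ->
    exists n : nat, agamma n `<=` N.

Definition prod_set (t : nat) (Gs : 'I_t -> set G) : set G :=
  [set x | exists f : 'I_t -> G, (forall j, Gs j (f j)) /\
     x = \big[mulg/oneg]_(j < t) f j].

End ProfiniteDefs.

(* Main.v *)
Require Import Defs.
From HB Require Import structures.
From mathcomp Require Import all_boot monoid.
From mathcomp Require Import boolp classical_sets filter topology.
Set Implicit Arguments.
Unset Strict Implicit.
Unset Printing Implicit Defensive.
Local Open Scope classical_set_scope.

Section ZD.
Variable T : topologicalType.
Hypothesis hT : hausdorff_space T.
Hypothesis cT : compact [set: T].

Lemma sepUV (A B : set T) : closed A -> closed B -> A `&` B = set0 ->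
  exists U V, [/\ open U, open V, A `<=` U, B `<=` V & U `&` V = set0].
Proof.
move=> cA cB AB.
have nT := compact_normal hT cT.
have snB : set_nbhs A (~` B).
  apply/set_nbhsP; exists (~` B); split => //; first exact: closed_openC.
  move=> z Az Bz; have : (A `&` B) z by [].
  by rewrite AB.
have [D sD cD] := nT A cA (~` B) snB.
have [C [oC AC CD]] := (set_nbhsP A D).1 sD.
exists C, (~` closure D); split => //.
- exact/closed_openC/closed_closure.
- by move=> z Bz /cD.
- apply/seteqP; split => // z [Cz]; apply.
  by apply: subset_closure; apply: CD.
Qed.
End ZD.

Section ZD.
Variable T : topologicalType.
Hypothesis hT : hausdorff_space T.
Hypothesis cT : compact [set: T].

Section Q.
Variable x : T.
Let Q := \bigcap_(C in [set C : set T | clopen C /\ C x]) C.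

Let Qclosed : closed Q.
Proof. by apply: closed_bigI => C [[]]. Qed.

Let Qx : Q x.
Proof. by move=> C [_]. Qed.

Let Qsep (A B : set T) : closed A -> closed B -> A `&` B = set0 ->
  Q `<=` A `|` B -> A x -> Q `&` B = set0.
Proof.
move=> cA cB AB QAB Ax.
have [U [V [oU oV AU BV UV]]] := sepUV hT cT cA cB AB.
pose K := ~` (U `|` V).
have cK : compact K.
  apply: (subclosed_compact _ cT) => //.
  exact/open_closedC/openU.
have [C [cC Cx CK]] : exists C, [/\ clopen C, C x & C `<=` U `|` V].
  apply: contrapT => nC.
  pose F := filter_from [set C : set T | clopen C /\ C x] (fun C => K `&` C).
  have FF : Filter F.
    apply: filter_from_filter; first by exists setT; split => //; exact: clopenT.
    move=> C1 C2 [c1 x1] [c2 x2]; exists (C1 `&` C2).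
      by split => //; exact: clopenI.
    by move=> z [Kz [C1z C2z]].
  have PF : ProperFilter F.
    apply: filter_from_proper => C [c1 x1].
    apply: contrapT => /set0P/negP; rewrite negbK => /eqP KC.
    apply: nC; exists C; split => // z Cz; apply: contrapT => nz.
    by have : (K `&` C) z by []; rewrite KC.
  have FK : F K by exists setT; [split => //; exact: clopenT | move=> z []].
  have [z [Kz clz]] := cK F PF FK.
  have nQz : ~ Q z.
    by move=> /QAB [/AU|/BV] w; apply: Kz; [left|right].
  apply: nQz => C [cC Cx]; apply: contrapT => nCz.
  have nbC : nbhs z (~` C).
    apply: open_nbhs_nbhs; split => //; exact: closed_openC (proj2 cC).
  have FC : F (K `&` C) by exists C.
  have [w [[_ Cw] nCw]] := clz _ _ FC nbC.
  by apply: nCw.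
have cCU : clopen (C `&` U).
  split; first by apply: openI => //; case: cC.
  have -> : C `&` U = C `&` ~` V.
    apply/seteqP; split => z [Cz Uz]; split => //.
      by move=> Vz; have : (U `&` V) z by []; rewrite UV.
    by case: (CK _ Cz).
  by apply: closedI; [case: cC | exact: open_closedC].
apply/seteqP; split => // z [Qz Bz].
have : (C `&` U) z by apply: Qz; split => //; split => //; exact: AU.
move=> [_ Uz]; have : (U `&` V) z by split => //; exact: BV.
by rewrite UV.
Qed.

Let Qconnected : connected Q.
Proof.
move=> B0 [w B0w] [O oO B0O] [D cD B0D].
have [B0x|nB0x] := pselect (B0 x).
- have QQO : Q `&` (Q `&` ~` O) = set0.
    apply: (@Qsep (Q `&` D) (Q `&` ~` O) (closedI Qclosed cD)
      (closedI Qclosed (open_closedC oO))).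
    + apply/seteqP; split => // z [[Qz Dz] [_ nOz]].
      have : (Q `&` D) z by []. by rewrite -B0D B0O => -[].
    + move=> z Qz; have [Oz|nOz] := pselect (O z); last by right.
      by left; rewrite -B0D B0O.
    + by rewrite -B0D.
  rewrite B0O; apply/seteqP; split => z; first by case.
  move=> Qz; split => //; apply: contrapT => nOz.
  by have : (Q `&` (Q `&` ~` O)) z by []; rewrite QQO.
- have QQD : Q `&` (Q `&` D) = set0.
    apply: (@Qsep (Q `&` ~` O) (Q `&` D)
      (closedI Qclosed (open_closedC oO)) (closedI Qclosed cD)).
    + apply/seteqP; split => // z [[Qz nOz] [_ Dz]].
      have : (Q `&` D) z by []. by rewrite -B0D B0O => -[].
    + move=> z Qz; have [Oz|nOz] := pselect (O z); last by left.
      by right; rewrite -B0D B0O.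
    + split => // Ox; apply: nB0x; rewrite B0O; done.
  exfalso.
  have : (Q `&` (Q `&` D)) w.
    by rewrite -B0D; split => //; move: B0w; rewrite B0O => -[].
  by rewrite QQD.
Qed.

Lemma Q_sub : totally_disconnected [set: T] -> Q `<=` [set x].
Proof.
move=> tdT; rewrite -(tdT x I).
by apply: connected_component_max.
Qed.
End Q.

Lemma zero_dim : totally_disconnected [set: T] -> zero_dimensional T.
Proof.
move=> tdT x y xy; apply: contrapT => nU.
have : y = x.
  apply: (Q_sub tdT) => C [cC Cx].
  by apply: contrapT => nCy; apply: nU; exists C.
by move=> yx; move: xy; rewrite yx eqxx.
Qed.

Lemma clopen_base : totally_disconnected [set: T] ->
  forall (x : T) U, nbhs x U -> exists V, [/\ clopen V, V x & V `<=` U].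
Proof.
move=> tdT x U xU.
have := zero_dimensional_cvg hT (zero_dim tdT) cT xU.
by move=> [D [Dx cD] DU]; exists D.
Qed.
End ZD.

Local Open Scope group_scope.

Section TopGroup.
Variable G : groupTopType.
Hypothesis TG : is_topological_group G.

Lemma mul_cvg (T : Type) (F : set_system T) (FF : Filter F) (f g : T -> G) a b :
  f @ F --> a -> g @ F --> b -> (fun x => f x * g x) @ F --> a * b.
Proof.
move=> fa gb; case: TG => mc _.
exact: (@continuous2_cvg _ G G G _ _ f g (fun u v => u * v) a b (mc (a, b))).
Qed.

Lemma lmul_cont (a : G) : continuous (fun x : G => a * x).
Proof. by move=> x; apply: mul_cvg; [exact: cvg_cst|exact: cvg_id]. Qed.

Lemma lmul_nbhs (y : G) (N : set G) : nbhs 1 N -> nbhs y [set z | N (y^-1 * z)].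
Proof.
move=> N1; have := @lmul_cont (y^-1) y N; rewrite /= mulVg => /(_ N1).
done.
Qed.

Lemma open_subgroup (N : set G) : is_subgroup N -> nbhs 1 N -> open N.
Proof.
move=> [N1 NM NV] nN; rewrite openE => y Ny.
apply: filterS (lmul_nbhs y nN) => z /= Nz.
by have := NM _ _ Ny Nz; rewrite mulVKg.
Qed.

Definition eqm (K : set G) (x y : G) := K (x^-1 * y).

Lemma clopen_inv (N Q : set G) : is_subgroup N -> open N ->
  (forall y y', eqm N y y' -> Q y -> Q y') -> clopen Q.
Proof.
move=> [N1 NM NV] oN QN.
have nN : nbhs 1 N by apply: open_nbhs_nbhs.
split.
  rewrite openE => y Qy.
  by apply: filterS (lmul_nbhs y nN) => z /= Nz; apply: QN Qy.
rewrite -(setCK Q); apply: open_closedC; rewrite openE => y nQy.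
apply: filterS (lmul_nbhs y nN) => z /= Nz Qz; apply: nQy.
apply: QN Qz; rewrite /eqm.
by have := NV _ Nz; rewrite invgM invgK.
Qed.

Lemma normal_in_clopen (V : set G) : compact [set: G] -> clopen V -> V 1 ->
  exists N, [/\ is_normal_subgroup N, open N & N `<=` V].
Proof.
move=> cG [oV cV] V1.
pose N := [set x : G | forall a b, V (a * b) <-> V (a * (x * b))].
have sN : is_subgroup N.
  rewrite /is_subgroup; split.
  - by move=> a b; rewrite mul1g.
  - move=> x y Nx Ny a b; rewrite (Ny a b) (Nx a (y * b)) !mulgA.
    done.
  - move=> x Nx a b; rewrite (Nx a (x^-1 * b)) mulVKg. done.
have nN : nbhs 1 N.
  have cGG : compact [set: G * G].
    by rewrite -setXTT; apply: compact_setX.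
  have H : forall p, [set: G * G] p ->
      \forall p' \near p & w \near (1 : G),
        (V (p'.1 * p'.2) <-> V (p'.1 * (w * p'.2))).
    move=> [a b] _.
    pose F := filter_prod (nbhs (a, b)) (nbhs (1 : G)).
    have FF : Filter F by apply: filter_prod_filter.
    have ca : (fun q : (G * G) * G => q.1.1) @ F --> a.
      apply: cvg_comp; first exact: cvg_fst.
      exact: cvg_fst.
    have cb : (fun q : (G * G) * G => q.1.2) @ F --> b.
      apply: cvg_comp; first exact: cvg_fst.
      exact: cvg_snd.
    have cw : (fun q : (G * G) * G => q.2) @ F --> (1 : G) by exact: cvg_snd.
    have c1 := mul_cvg FF ca cb.
    have c2 := mul_cvg FF ca (mul_cvg FF cw cb).
    rewrite mul1g in c2.
    have [Vab|nVab] := pselect (V (a * b)).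
      have nV : nbhs (a * b) V by apply: open_nbhs_nbhs.
      have h1 : F [set q | V (q.1.1 * q.1.2)] := c1 _ nV.
      have h2 : F [set q | V (q.1.1 * (q.2 * q.1.2))] := c2 _ nV.
      have h : F (fun q => V (q.1.1 * q.1.2) <-> V (q.1.1 * (q.2 * q.1.2))).
        by apply: filterS (filterI h1 h2) => q [].
      exact: h.
    have nV : nbhs (a * b) (~` V).
      by apply: open_nbhs_nbhs; split => //; exact: closed_openC.
    have h1 : F [set q | ~ V (q.1.1 * q.1.2)] := c1 _ nV.
    have h2 : F [set q | ~ V (q.1.1 * (q.2 * q.1.2))] := c2 _ nV.
    have h : F (fun q => V (q.1.1 * q.1.2) <-> V (q.1.1 * (q.2 * q.1.2))).
      by apply: filterS (filterI h1 h2) => q [] /= h3 h4; split.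
    exact: h.
  have h : \forall w \near (1 : G), [set: G * G] `<=`
      (fun p => V (p.1 * p.2) <-> V (p.1 * (w * p.2))).
    exact: ((compact_near_coveringP _).1 cGG G (nbhs (1 : G)) _ _ H).
  by apply: filterS h => w Hw a b; exact: (Hw (a, b) I).
exists N; split.
- split => // x g Nx a b.
  have -> : a * (g^-1 * (x * g) * b) = (a * g^-1) * (x * (g * b)).
    by rewrite !mulgA.
  by rewrite -(Nx (a * g^-1) (g * b)) -mulgA mulKg.
- exact: open_subgroup.
- by move=> x Nx; move: (Nx 1 1).1; rewrite !mulg1 mul1g; apply.
Qed.
End TopGroup.

Section Alg.
Variable G : groupTopType.
Implicit Types (K A S : set G) (x y z g : G).

Section Eqm.
Variable K : set G.
Hypothesis nK : is_normal_subgroup K.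

Lemma eqm_refl x : eqm K x x.
Proof. by case: nK => -[K1 _ _] _; rewrite /eqm mulVg. Qed.

Lemma eqm_sym x y : eqm K x y -> eqm K y x.
Proof.
case: nK => -[_ _ KV] _; rewrite /eqm => /KV.
by rewrite invgM invgK.
Qed.

Lemma eqm_trans x y z : eqm K x y -> eqm K y z -> eqm K x z.
Proof.
case: nK => -[_ KM _] _; rewrite /eqm => h1 h2.
by have := KM _ _ h1 h2; rewrite -mulgA mulVKg.
Qed.

Lemma eqm_mull x y z : eqm K x y -> eqm K (z * x) (z * y).
Proof. by rewrite /eqm invgM -mulgA mulKg. Qed.

Lemma eqm_mulr x y z : eqm K x y -> eqm K (x * z) (y * z).
Proof.
case: nK => _ KJ; rewrite /eqm => /(KJ _ z).
by rewrite invgM !mulgA.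
Qed.

Lemma eqm_mul x y x' y' : eqm K x y -> eqm K x' y' -> eqm K (x * x') (y * y').
Proof.
move=> h1 h2; apply: (@eqm_trans _ (y * x')); first exact: eqm_mulr.
exact: eqm_mull.
Qed.

Lemma eqm_inv x y : eqm K x y -> eqm K x^-1 y^-1.
Proof.
case: nK => -[_ _ KV] KJ; rewrite /eqm => /KV /(KJ _ y^-1).
by rewrite invgK !invgM !invgK !mulgA mulgV mul1g.
Qed.

Lemma eqmK y : K y <-> eqm K 1 y.
Proof. by rewrite /eqm invg1 mul1g. Qed.

Lemma prod_central t (c : 'I_t -> G) :
  (forall j g, eqm K (c j * g) (g * c j)) ->
  forall g, eqm K ((\big[mul/1]_(j < t) c j) * g) (g * \big[mul/1]_(j < t) c j).
Proof.
elim: t c => [|t IH] c Hc g.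
  by rewrite big_ord0 mul1g mulg1; exact: eqm_refl.
rewrite big_ord_recr /=.
set C := \big[mul/1]_(i < t) c (widen_ord (leqnSn t) i).
have HC : forall g, eqm K (C * g) (g * C).
  by apply: IH => j; apply: Hc.
apply: (@eqm_trans _ (C * (g * c ord_max))).
  by rewrite -mulgA; apply: eqm_mull; apply: Hc.
rewrite !mulgA; apply: eqm_mulr; exact: HC.
Qed.

Lemma rearr t (f c : 'I_t -> G) :
  (forall j g, eqm K (c j * g) (g * c j)) ->
  eqm K ((\big[mul/1]_(j < t) f j) * (\big[mul/1]_(j < t) c j))
        (\big[mul/1]_(j < t) (f j * c j)).
Proof.
elim: t f c => [|t IH] f c Hc.
  by rewrite !big_ord0 mulg1; exact: eqm_refl.
rewrite !big_ord_recr /=.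
set A := \big[mul/1]_(i < t) f (widen_ord (leqnSn t) i).
set C := \big[mul/1]_(i < t) c (widen_ord (leqnSn t) i).
set B := \big[mul/1]_(i < t) (f (widen_ord (leqnSn t) i) * c (widen_ord (leqnSn t) i)).
have HC : forall g, eqm K (C * g) (g * C).
  by apply: prod_central => j; apply: Hc.
have IHt : eqm K (A * C) B by apply: IH => j; apply: Hc.
apply: (@eqm_trans _ ((A * C) * (f ord_max * c ord_max))); last first.
  exact: eqm_mulr.
rewrite -!mulgA; apply: eqm_mull; rewrite !mulgA; apply: eqm_mulr.
apply: eqm_sym; exact: HC.
Qed.
End Eqm.

Lemma big_only t (F : 'I_t -> G) (j : 'I_t) :
  (forall i, i != j -> F i = 1) -> \big[mul/1]_(i < t) F i = F j.
Proof.
elim: t F j => [|t IH] F j H; first by move: H; case: j.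
rewrite big_ord_recr /=.
case: (unliftP ord_max j) => [j'|] ej; rewrite ej in H *.
  have e : lift ord_max j' = widen_ord (leqnSn t) j' by apply: val_inj; exact: lift_max.
  rewrite e in H *.
  rewrite (IH (fun i => F (widen_ord (leqnSn t) i)) j').
    rewrite (H ord_max) ?mulg1 //.
    by apply/eqP => /(congr1 val) /= h; move: (ltn_ord j'); rewrite -h ltnn.
  move=> i ij; apply: H; apply: contra ij => /eqP /(congr1 val) /= h.
  by apply/eqP; apply: val_inj.
rewrite big1 ?mul1g // => i _; apply: H.
by apply/eqP => /(congr1 val) /= h; move: (ltn_ord i); rewrite h ltnn.
Qed.

Lemma gen_subgroup S : is_subgroup (gen S).
Proof.
rewrite /is_subgroup; split.
- by move=> H [[H1 _ _] _].
- by move=> x y hx hy H hH; case: (hH) => -[_ HM _] _; apply: HM; [apply: hx|apply: hy].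
- by move=> x hx H hH; case: (hH) => -[_ _ HV] _; apply: HV; apply: hx.
Qed.

Lemma cl_gen_subgroup S : is_subgroup (cl_gen S).
Proof.
rewrite /is_subgroup; split.
- by move=> H [[[H1 _ _] _] _].
- by move=> x y hx hy H hH; case: (hH) => -[[_ HM _] _] _; apply: HM; [apply: hx|apply: hy].
- by move=> x hx H hH; case: (hH) => -[[_ _ HV] _] _; apply: HV; apply: hx.
Qed.

Lemma gen_sub S : S `<=` gen S.
Proof. by move=> x Sx H [_ SH]; apply: SH. Qed.

Lemma gen_min S H : is_subgroup H -> S `<=` H -> gen S `<=` H.
Proof. by move=> sH SH x; apply. Qed.

Lemma cl_gen_min S H : is_closed_subgroup H -> S `<=` H -> cl_gen S `<=` H.
Proof. by move=> sH SH x; apply. Qed.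

Lemma gen_cl_gen S S' : S `<=` S' -> gen S `<=` cl_gen S'.
Proof.
move=> SS x gx H [[sH cH] SH]; apply: gx; split => //.
exact: subset_trans SH.
Qed.

Lemma setT_normal : is_normal_subgroup [set: G].
Proof. by split. Qed.

Lemma gen_normal S : (forall s g, S s -> S (s ^ g)) -> is_normal_subgroup (gen S).
Proof.
move=> SJ; split; first exact: gen_subgroup.
move=> x g gx H [sH SH].
have : gen S `<=` [set y | H (y ^ g)].
  apply: gen_min.
    case: sH => H1 HM HV; rewrite /is_subgroup; split => /=.
    - by rewrite conj1g.
    - by move=> u v Hu Hv; rewrite conjMg; apply: HM.
    - by move=> u Hu; rewrite conjVg; apply: HV.
  by move=> s Ss /=; apply: SH; apply: SJ.
by move=> /(_ x gx).
Qed.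

Lemma comms_conj A : is_normal_subgroup A -> forall s g, comms A s -> comms A (s ^ g).
Proof.
move=> [_ AJ] s g [x Ax [h _ <-]].
rewrite conjRg; exists (x ^ g); first exact: AJ.
by exists (h ^ g).
Qed.

Lemma agamma_normal i : is_normal_subgroup (@agamma G i).
Proof.
elim: i => [|[|i] IH]; try exact: setT_normal.
exact/gen_normal/comms_conj.
Qed.

Lemma agamma_sub_gamma i : @agamma G i `<=` gamma i.
Proof.
elim: i => [|[|i] IH] //=.
apply: gen_cl_gen => s [x Ax [g _ <-]].
by exists x; [exact: IH | exists g].
Qed.

Lemma gamma_subgroup i : is_subgroup (@gamma G i).
Proof.
case: i => [|[|i]]; try by rewrite /is_subgroup.
exact: cl_gen_subgroup.
Qed.

Section ModN.
Hypothesis TG : is_topological_group G.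
Variable N : set G.
Hypothesis nN : is_normal_subgroup N.
Hypothesis oN : open N.

Definition Kset i := [set y | exists2 a, agamma i a & eqm N a y].

Lemma K_normal i : is_normal_subgroup (Kset i).
Proof.
have [[a1 aM aV] aJ] := agamma_normal i.
split; first split.
- by exists 1 => //; exact: eqm_refl.
- move=> x y [a ha hx] [b hb hy]; exists (a * b); first exact: aM.
  exact: eqm_mul.
- move=> x [a ha hx]; exists a^-1; first exact: aV.
  exact: eqm_inv.
- move=> x g [a ha hx]; exists (g^-1 * (a * g)); first exact: aJ.
  by apply: eqm_mull => //; apply: eqm_mulr.
Qed.

Lemma N_sub_K i : N `<=` Kset i.
Proof.
have [[a1 _ _] _] := agamma_normal i.
by move=> n Nn; exists 1 => //; exact: ((eqmK N n).1 Nn).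
Qed.

Lemma K_clopen i : clopen (Kset i).
Proof.
apply: (clopen_inv TG (proj1 nN) oN) => y y' h [a ha hy].
by exists a => //; apply: eqm_trans h.
Qed.

Lemma comm_K i x g : (1 <= i)%N -> Kset i x -> Kset i.+1 (commg x g).
Proof.
case: i => // i _ [a ha hx]; exists (commg a g).
  by apply: gen_sub; exists a => //; exists g.
rewrite /commg /conjg; apply: eqm_mul => //; first exact: eqm_inv.
by apply: eqm_mull => //; apply: eqm_mulr.
Qed.

Lemma gamma_sub_K i : (1 <= i)%N -> gamma i `<=` Kset i.
Proof.
elim: i => // -[_ _|i IH _].
  by move=> y _; exists y => //; apply: eqm_refl.
apply: cl_gen_min.
  split; first exact: (proj1 (K_normal _)).
  exact: (proj2 (K_clopen _)).
move=> s [x gx [g _ <-]]; apply: comm_K => //.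
exact: IH.
Qed.

Lemma central_gamma i x g : (1 <= i)%N -> gamma i x -> eqm (Kset i.+1) (x * g) (g * x).
Proof.
move=> i1 gx; have h := comm_K g i1 (gamma_sub_K i1 gx).
have [[_ _ KV] _] := K_normal i.+1.
have := KV _ h; rewrite invgR /commg /conjg /eqm invgM.
by rewrite !mulgA.
Qed.

End ModN.

End Alg.

Section Main.
Variable G : groupTopType.
Hypothesis TG : is_topological_group G.
Variable N : set G.
Hypothesis nN : is_normal_subgroup N.
Hypothesis oN : open N.
Variable t : nat.
Variable Gs : 'I_t -> set G.
Hypothesis hGs : forall j, is_closed_subgroup (Gs j).
Hypothesis hyp : forall i : nat, (1 <= i)%N ->
     @gamma G i = cl_gen (\bigcup_(j in [set: 'I_t]) (@gamma G i `&` Gs j)).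

Definition Qset i := [set y | exists c : 'I_t -> G,
  (forall j, gamma i (c j) /\ Gs j (c j)) /\
  eqm (Kset N i.+1) (\big[mul/1]_(j < t) c j) y].

Section I.
Variable i : nat.
Hypothesis i1 : (1 <= i)%N.
Let nK := K_normal nN i.+1.
Let cent x g : gamma i x -> eqm (Kset N i.+1) (x * g) (g * x).
Proof. by move=> gx; apply: (central_gamma TG nN oN g i1 gx). Qed.

Lemma Q_subgroup : is_subgroup (Qset i).
Proof.
have [g1 gM gV] := gamma_subgroup G i.
rewrite /is_subgroup; split.
- exists (fun _ => 1); split.
    by move=> j; split => //; case: (hGs j) => -[].
  by rewrite big1 //; exact: eqm_refl.
- move=> x y [c [hc ex]] [d [hd ey]].
  exists (fun j => c j * d j); split.
    move=> j; have [gc Gc] := hc j; have [gd Gd] := hd j.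
    split; first exact: gM.
    by case: (hGs j) => -[_ HM _] _; apply: HM.
  have hh := eqm_mul nK ex ey.
  apply: (eqm_trans nK _ hh).
  apply: (eqm_sym nK); apply: (rearr nK) => j g.
  exact/cent/(proj1 (hd j)).
- move=> x [c [hc ex]].
  exists (fun j => (c j)^-1); split.
    move=> j; have [gc Gc] := hc j.
    split; first exact: gV.
    by case: (hGs j) => -[_ _ HV] _; apply: HV.
  apply: (eqm_trans nK _ (eqm_inv nK ex)).
  have h := @rearr _ _ nK t c (fun j => (c j)^-1)
    (fun j g => cent g (gV _ (proj1 (hc j)))).
  have e : \big[mul/1]_(j < t) (c j * (c j)^-1) = 1.
    by apply: big1 => j _; rewrite mulgV.
  rewrite e in h.
  have := eqm_mull (\big[mul/1]_(j < t) c j)^-1 h.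
  by rewrite mulg1 mulgA mulVg mul1g.
Qed.

Lemma Q_closed : closed (Qset i).
Proof.
suff : clopen (Qset i) by case.
apply: (clopen_inv TG (proj1 nN) oN) => y y' h [c [hc ey]]; exists c; split => //.
apply: (eqm_trans nK ey).
rewrite /eqm; apply: N_sub_K; exact: h.
Qed.

Lemma gamma_sub_Q : gamma i `<=` Qset i.
Proof.
rewrite (hyp i1); apply: cl_gen_min; first by split; [exact: Q_subgroup | exact: Q_closed].
move=> y [j _ [gy Gy]].
have [g1 _ _] := gamma_subgroup G i.
exists (fun j' => if j' == j then y else 1); split.
  move=> j'; case: eqP => [->|_]; split => //.
  by case: (hGs j') => -[].
rewrite (@big_only _ _ _ j); first by rewrite eqxx; exact: eqm_refl.
by move=> j' /negbTE ->.
Qed.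

Lemma K_sub_Q : Kset N i `<=` Qset i.
Proof.
move=> y [a ha hy].
have [c [hc ea]] := gamma_sub_Q (agamma_sub_gamma ha).
exists c; split => //; apply: (eqm_trans nK ea).
rewrite /eqm; apply: N_sub_K; exact: hy.
Qed.
End I.

Lemma claim i : (1 <= i)%N ->
  forall x, exists2 p, prod_set Gs p & Kset N i (p^-1 * x).
Proof.
elim: i => // -[_ _|i IH _] x.
  exists 1.
    exists (fun _ => 1); split; last by rewrite big1.
    by move=> j; case: (hGs j) => -[].
  by exists (1^-1 * x) => //; exact: eqm_refl nN _.
have [p [f [hf ->]] hk] := IH isT x.
have [c [hc ec]] := K_sub_Q (i:=i.+1) isT hk.
have nK := K_normal nN i.+2.
exists (\big[mul/1]_(j < t) (f j * c j)).
  exists (fun j => f j * c j); split => // j.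
  by case: (hGs j) => -[_ HM _] _; apply: HM => //; case: (hc j).
rewrite -/(eqm _ _ _).
apply: (eqm_trans nK (eqm_sym nK (rearr nK f (fun j g => @central_gamma _ TG N nN oN i.+1 _ g isT (proj1 (hc j)))))).
have := eqm_mull (\big[mul/1]_(j < t) f j) ec.
by rewrite mulVKg.
Qed.

Lemma inPN x : (exists n, agamma n `<=` N) ->
  exists2 p, prod_set Gs p & N (p^-1 * x).
Proof.
move=> [n hn].
have [m [m1 hm]] : exists m, (1 <= m)%N /\ agamma m `<=` N.
  by case: n hn => [|n] hn; [exists 1%N | exists n.+1].
have [p hp [a ha hx]] := claim m1 x.
exists p => //.
case: nN => -[_ NM _] _.
by have := NM _ _ (hm _ ha) hx; rewrite mulVKg.
Qed.

End Main.

Lemma prod_compact (G : groupTopType) : is_topological_group G ->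
  forall t (Gs : 'I_t -> set G), (forall j, compact (Gs j)) -> compact (prod_set Gs).
Proof.
move=> [mc _]; elim => [|t IH] Gs cGs.
  have -> : prod_set Gs = [set 1].
    apply/seteqP; split => x.
      by move=> [f [_ ->]]; rewrite big_ord0.
    by move=> ->; exists (fun _ => 1); split => [[]//|]; rewrite big_ord0.
  exact: compact_set1.
pose Gs' := fun j : 'I_t => Gs (widen_ord (leqnSn t) j).
have e j : lift ord_max j = widen_ord (leqnSn t) j by apply: val_inj; exact: lift_max.
have -> : prod_set Gs = (fun p : G * G => p.1 * p.2) @` (prod_set Gs' `*` Gs ord_max).
  apply/seteqP; split => x.
    move=> [f [hf ->]]; rewrite big_ord_recr /=.
    exists (\big[mul/1]_(i < t) f (widen_ord (leqnSn t) i), f ord_max) => //.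
    split => //; exists (fun j => f (widen_ord (leqnSn t) j)); split => //.
    by move=> j; exact: hf.
  move=> [[a b] [[f' [hf' ->]] hb] <-] /=.
  exists (fun j => if unlift ord_max j is Some j' then f' j' else b); split.
    move=> j; case: (unliftP ord_max j) => [j'|] ->; last exact: hb.
    by rewrite e; exact: hf'.
  rewrite big_ord_recr /= unlift_none; congr (_ * _).
  by apply: eq_bigr => j _; rewrite -e liftK.
apply: continuous_compact.
  by apply: continuous_subspaceT => p; exact: mc.
apply: compact_setX; first by apply: IH => j; exact: cGs.
exact: cGs.
Qed.

Local Close Scope group_scope.
Theorem lemma7p2 (G : groupTopType) (t : nat) (Gs : 'I_t -> set G) :
  is_pronilpotent G ->
  (forall j, is_closed_subgroup (Gs j)) ->
  cl_gen (\bigcup_(j in [set: 'I_t]) Gs j) = [set: G] ->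
  (forall i : nat, (1 <= i)%N ->
     @gamma G i = cl_gen (\bigcup_(j in [set: 'I_t]) (@gamma G i `&` Gs j))) ->
  prod_set Gs = [set: G].
Proof.
move=> [[TG cG hG tdG] hnil] hGs _ hyp.
apply/seteqP; split => // x _.
have cP : closed (prod_set Gs).
  apply: (compact_closed hG); apply: prod_compact => // j.
  exact: (subclosed_compact (proj2 (hGs j)) cG).
apply: contrapT => nPx.
pose U := [set z : G | ~ prod_set Gs (monoid.mul x z)].
have oU : open U.
  have := (continuousP _).1 (@lmul_cont _ TG x) (~` prod_set Gs) (closed_openC cP).
  done.
have nU : nbhs (monoid.one : G) U.
  by apply: open_nbhs_nbhs; split => //; rewrite /U /= monoid.mulg1.
have [V [cV V1 VU]] := clopen_base hG cG tdG nU.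
have [N [nN oN NV]] := normal_in_clopen TG cG cV V1.
have [p Pp Np] := inPN TG nN oN hGs hyp x (hnil N nN oN).
have Nq : N (monoid.mul (monoid.inv x) p).
  case: nN => -[_ _ NV'] _; have := NV' _ Np.
  by rewrite monoid.invgM monoid.invgK.
by apply: (VU _ (NV _ Nq)); rewrite monoid.mulgA monoid.mulgV monoid.mul1g.
Qed.

Print Assumptions lemma7p2.
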